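(* Let $p\in(1,\infty)$. A metric space has property HC$_{p,d}$ if and only if it has property HIC$_{p,d}$.
   Context: For infinite $\mathbb M\subseteq\mathbb N$ and $k\in\mathbb N$, $[\mathbb M]^k$ is the set of $\bar n=(n_1,\dots,n_k)\in\mathbb M^k$ with $n_1<\dots<n_k$, with Hamming distance $d_{\mathbb H}(\bar n,\bar m)=|\{j:n_j\ne m_j\}|$; $[\mathbb M]^\omega$ is the set of infinite subsets of $\mathbb M$; $I_k(\mathbb M)=\{(\bar n,\bar m): n_1<m_1<\dots<n_k<m_k\}$; $H_j(\mathbb M)=\{(\bar n,\bar m)\in([\mathbb M]^k)^2: n_i=m_i\ (i\ne j),\ n_j<m_j\}$. For a metric space $(M,d)$, $\lambda>0$ and Lipschitz $f:([\mathbb N]^k,d_{\mathbb H})\to M$, put $\alpha_j=\sup_{(\bar n,\bar m)\in H_j(\mathbb N)}d(f(\bar n),f(\bar m))$. $M$ has $\lambda$-HIC$_{p,d}$ if for every $k$ and every such $f$ there is $\mathbb M\in[\mathbb N]^\omega$ with $d(f(\bar n),f(\bar m))\le\lambda(\sum_{j=1}^k\alpha_j^p)^{1/p}$ for all $(\bar n,\bar m)\in I_k(\mathbb M)$. $M$ has $\lambda$-HC$_{p,d}$ if for every $k$ and every such $f$ there are $\bar n,\bar m\in[\mathbb N]^k$ with $\bar n\cap\bar m=\varnothing$ (as sets) and $d(f(\bar n),f(\bar m))\le\lambda(\sum_{j=1}^k\alpha_j^p)^{1/p}$. HIC$_{p,d}$ (resp. HC$_{p,d}$) means $\lambda$-HIC$_{p,d}$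 (resp. $\lambda$-HC$_{p,d}$) for some $\lambda>0$. *)

(* Defs.v *)
From HB Require Import structures.
From mathcomp Require Import all_boot all_order all_algebra.
From mathcomp Require Import boolp classical_sets cardinality reals exp.
Set Implicit Arguments. Unset Strict Implicit. Unset Printing Implicit Defensive.
Import Order.TTheory GRing.Theory Num.Theory.
Local Open Scope classical_set_scope.
Local Open Scope ring_scope.

Definition is_metric (R : realType) (M : Type) (d : M -> M -> R) : Prop :=
  [/\ forall x y, 0 <= d x y,
      forall x y, d x y = 0 <-> x = y,
      forall x y, d x y = d y x &
      forall x y z, d x z <= d x y + d y z].

(* An element nbar = (n_1,...,n_k) of N^k is a k-tuple of naturals
   (index j : 'I_k stands for n_{j+1}). *)

Definition in_seqk (k : nat) (MM : set nat) (n : k.-tuple nat) : Prop :=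
  sorted ltn n /\ forall j : 'I_k, MM (tnth n j).

Definition hamming (k : nat) (n m : k.-tuple nat) : nat :=
  #|[pred j : 'I_k | tnth n j != tnth m j]|.

Definition lipschitz_H (R : realType) (M : Type) (d : M -> M -> R) (k : nat)
  (f : k.-tuple nat -> M) : Prop :=
  exists L : R, forall n m, in_seqk setT n -> in_seqk setT m ->
    d (f n) (f m) <= L * (hamming n m)%:R.

Definition interlaced (k : nat) (MM : set nat) (n m : k.-tuple nat) : Prop :=
  [/\ in_seqk MM n, in_seqk MM m,
      forall j : 'I_k, (tnth n j < tnth m j)%N &
      forall i j : 'I_k, val j = (val i).+1 -> (tnth m i < tnth n j)%N].

Definition H_pair (k : nat) (j : 'I_k) (n m : k.-tuple nat) : Prop :=
  [/\ in_seqk setT n, in_seqk setT m,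
      forall i : 'I_k, i != j -> tnth n i = tnth m i &
      (tnth n j < tnth m j)%N].

Definition alpha (R : realType) (M : Type) (d : M -> M -> R) (k : nat)
  (f : k.-tuple nat -> M) (j : 'I_k) : R :=
  sup [set r : R | exists n m, H_pair j n m /\ r = d (f n) (f m)].

Definition alpha_pnorm (R : realType) (M : Type) (d : M -> M -> R) (p : R)
  (k : nat) (f : k.-tuple nat -> M) : R :=
  (\sum_(j < k) (alpha d f j) `^ p) `^ (p^-1).

Definition lam_HIC (R : realType) (M : Type) (d : M -> M -> R) (p lam : R) : Prop :=
  forall (k : nat) (f : k.-tuple nat -> M), lipschitz_H d f ->
    exists MM : set nat, infinite_set MM /\
      forall n m, interlaced MM n m -> d (f n) (f m) <= lam * alpha_pnorm d p f.

Definition lam_HC (R : realType) (M : Type) (d : M -> M -> R) (p lam : R) : Prop :=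
  forall (k : nat) (f : k.-tuple nat -> M), lipschitz_H d f ->
    exists n m, [/\ in_seqk setT n, in_seqk setT m,
      (forall i j : 'I_k, tnth n i != tnth m j) &
      d (f n) (f m) <= lam * alpha_pnorm d p f].

Definition HIC (R : realType) (M : Type) (d : M -> M -> R) (p : R) : Prop :=
  exists lam : R, 0 < lam /\ lam_HIC d p lam.

Definition HC (R : realType) (M : Type) (d : M -> M -> R) (p : R) : Prop :=
  exists lam : R, 0 < lam /\ lam_HC d p lam.

(* Main.v *)
Require Import Defs.
From HB Require Import structures.
From mathcomp Require Import all_boot all_order all_algebra.
From mathcomp Require Import boolp classical_sets cardinality reals exp.
Import Order.TTheory GRing.Theory Num.Theory.
Set Implicit Arguments. Unset Strict Implicit. Unset Printing Implicit Defensive.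

Definition sinc (e : nat -> nat) := forall i, (e i < e i.+1)%N.

Lemma sinc_lt e : sinc e -> forall i j, (i < j)%N -> (e i < e j)%N.
Proof. move=> se i j; exact: (homo_ltn ltn_trans se). Qed.

Lemma sinc_le e : sinc e -> forall i j, (i <= j)%N -> (e i <= e j)%N.
Proof.
move=> se i j; rewrite leq_eqVlt => /orP[/eqP->//|/(sinc_lt se)]; exact: ltnW.
Qed.

Lemma sinc_ltE e : sinc e -> forall i j, (e i < e j)%N = (i < j)%N.
Proof.
move=> se i j; apply/idP/idP; last exact: sinc_lt.
by apply: contraLR; rewrite -!leqNgt; apply: sinc_le.
Qed.

Lemma sinc_inj e : sinc e -> injective e.
Proof.
move=> se i j eij; case: (ltngtP i j) => // h; move: (sinc_lt se h);
by rewrite eij ltnn.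
Qed.

Lemma sinc_comp e h : sinc e -> sinc h -> sinc (e \o h).
Proof. by move=> se sh i; rewrite /= (sinc_ltE se). Qed.

Lemma sinc_ge e : sinc e -> forall i, (i <= e i)%N.
Proof. by move=> se; elim=> // i IH; apply: leq_ltn_trans IH (se i). Qed.

Lemma lift_seq e (s : seq nat) : sinc e -> (forall x, x \in s -> exists j, e j = x) ->
  exists u, map e u = s.
Proof.
move=> se; elim: s => [|x s IH] H; first by exists [::].
have [j ej] := H x (mem_head _ _).
have [u eu] : exists u, map e u = s by apply: IH => z zs; apply: H; rewrite inE zs orbT.
by exists (j :: u); rewrite /= ej eu.
Qed.



Lemma sorted_map_sinc e (u : seq nat) : sinc e ->
  sorted ltn (map e u) = sorted ltn u.
Proof.
move=> se; rewrite sorted_map; apply/idP/idP; apply: sub_sorted => a b /=;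
by rewrite (sinc_ltE se).
Qed.

Lemma pigeon_nat (C : finType) (g : nat -> C) :
  exists c0 sg, sinc sg /\ forall i, g (sg i) = c0.
Proof.
have [c0 Hc0] : exists c0, forall n, exists m, (n < m)%N /\ g m = c0.
  apply: contrapT => H.
  have H' : forall c : C, exists n, forall m, (n < m)%N -> g m != c.
    move=> c; apply: contrapT => Hc; apply: H; exists c => n.
    apply: contrapT => Hn; apply: Hc; exists n => m nm; apply/eqP => gm.
    by apply: Hn; exists m.
  have [N HN] := choice H'.
  have := HN (g (\max_c N c).+1) (\max_c N c).+1.
  by rewrite ltnS leq_bigmax eqxx => /(_ isT).
have [F HF] := choice Hc0.
pose sg := fix sg i := if i is i'.+1 then F (sg i') else F 0%N.
exists c0, sg; split; first by move=> i; exact: (HF (sg i)).1.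
by case=> [|i]; [exact: (HF 0%N).2 | exact: (HF (sg i)).2].
Qed.

Lemma ramsey (C : finType) r : forall (c : seq nat -> C),
  exists e c0, sinc e /\ forall s, sorted ltn s -> size s = r -> c (map e s) = c0.
Proof.
elim: r => [|r IH] c.
  exists id, (c [::]); split => // -[|//] _ _; by [].
have H : forall e : nat -> nat, exists hg : (nat -> nat) * C, sinc hg.1 /\
    forall s, sorted ltn s -> size s = r ->
      c (e 0%N :: map (e \o succn \o hg.1) s) = hg.2.
  move=> e; have [h [g [sh Hh]]] := IH (fun s => c (e 0%N :: map (e \o succn) s)).
  exists (h, g); split => // s ss zs; rewrite -(Hh s ss zs) /=.
  by rewrite -map_comp.
have [F HF] := choice H.
pose nxt e := e \o succn \o (F e).1.
pose E t := iter t nxt id.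
have sE : forall t, sinc (E t).
  elim=> [|t IHt] /=; first by move=> i.
  apply: sinc_comp; last exact: (HF _).1.
  by apply: sinc_comp.
have ES : forall t, E t.+1 = nxt (E t) by [].
have Erange : forall t n i, exists j, E (t.+1 + n)%N i = E t.+1 j.
  move=> t; elim=> [|n IHn] i; first by exists i; rewrite addn0.
  rewrite addnS ES /nxt /=.
  exact: IHn.
have Egt : forall t j, (E t 0 < E t.+1 j)%N.
  by move=> t j; rewrite ES /nxt /= (sinc_ltE (sE t)).
pose a t := E t 0%N.
have sa : sinc a.
  move=> t; rewrite /a; exact: Egt.
have [g0 [sg [ssg Hsg]]] := pigeon_nat (fun t => (F (E t)).2).
exists (a \o sg), g0; split; first exact: sinc_comp.
case=> [|t0 s] //= sts [zs].
set tau := sg t0.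
have allgt : forall x, x \in s -> (t0 < x)%N.
  move=> x xs; move: sts; rewrite /= (path_sortedE ltn_trans) => /andP[/allP + _].
  exact.
have [u eu] : exists u, map (E tau.+1) u = map (a \o sg) s.
  apply: lift_seq; first exact: sE.
  move=> x /mapP[y ys ->] /=; rewrite /a.
  have : (tau < sg y)%N by rewrite (sinc_ltE ssg); exact: allgt.
  move/subnKC => <-.
  have [j hj] := Erange tau (sg y - tau.+1) 0%N.
  by exists j; rewrite hj.
have su : sorted ltn u.
  rewrite -(sorted_map_sinc _ (sE tau.+1)) eu (sorted_map_sinc _ (sinc_comp sa ssg)).
  by move: sts => /= /path_sorted.
have zu : size u = r by rewrite -(size_map (E tau.+1)) eu size_map.
rewrite -(Hsg t0) -eu; exact: (HF (E tau)).2 u su zu.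
Qed.
Lemma snth_lt (s : seq nat) i j : sorted ltn s -> (i < size s)%N -> (j < size s)%N ->
  (nth 0 s i < nth 0 s j)%N = (i < j)%N.
Proof.
move=> ss iz jz; apply/idP/idP; last first.
  by apply: (sorted_ltn_nth ltn_trans 0 ss).
apply: contraLR; rewrite -!leqNgt leq_eqVlt => /orP[/eqP->//|ji].
by apply: ltnW; apply: (sorted_ltn_nth ltn_trans 0 ss).
Qed.

Lemma snth_le (s : seq nat) i j : sorted ltn s -> (i < size s)%N -> (j < size s)%N ->
  (nth 0 s i <= nth 0 s j)%N = (i <= j)%N.
Proof. by move=> ss iz jz; rewrite leqNgt snth_lt // -leqNgt. Qed.

Section Psi.
Variables (k : nat) (x y z n' m' : seq nat).
Hypotheses (zx : size x = k) (zy : size y = k) (zz : size z = k)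
  (zn : size n' = k) (zm : size m' = k).
Hypotheses (sx : sorted ltn x) (sy : sorted ltn y) (sz : sorted ltn z).
Hypothesis disj : forall v, v \in x -> v \notin y.
Hypothesis H1 : forall j, (j < k)%N -> (nth 0 n' j < nth 0 m' j)%N.
Hypothesis H2 : forall j, (j.+1 < k)%N -> (nth 0 m' j + k < nth 0 n' j.+1)%N.
Hypothesis H3 : (0 < k)%N -> (k < nth 0 n' 0)%N.
Hypothesis Hz : forall j, (j < k)%N -> (nth 0 n' j <= nth 0 z j <= nth 0 m' j)%N.

Lemma gapmn i j : (i < j)%N -> (j < k)%N -> (nth 0 m' i + k < nth 0 n' j)%N.
Proof.
move=> ij; elim: j ij => [//|j IH] ij jk.
move: ij; rewrite ltnS leq_eqVlt => /orP[/eqP->|ij]; first exact: H2.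
apply: ltn_trans (IH ij (ltnW jk)) _.
apply: leq_ltn_trans (H2 jk); apply: leq_trans (ltnW (H1 (ltnW jk))) _.
exact: leq_addr.
Qed.

Lemma mono_m i j : (i <= j)%N -> (j < k)%N -> (nth 0 m' i <= nth 0 m' j)%N.
Proof.
rewrite leq_eqVlt => /orP[/eqP->//|ij] jk.
apply: ltnW; apply: ltn_trans (H1 jk); apply: leq_ltn_trans (gapmn ij jk).
exact: leq_addr.
Qed.

Lemma n'_gt j : (j < k)%N -> (k < nth 0 n' j)%N.
Proof.
case: j => [|j] jk; first exact: H3.
apply: leq_ltn_trans (gapmn (ltn0Sn j) jk); exact: leq_addl.
Qed.

Definition rk v := (\max_(j < k | (nth 0 x j < v)%N) j.+1)%N.
Definition base r := if r is r'.+1 then (nth 0 m' r').+1 else 0%N.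
Definition psi v := if v \in x then nth 0 z (index v x) else (base (rk v) + index v y)%N.

Lemma rk_gt v j : (j < k)%N -> (nth 0 x j < v)%N -> (j < rk v)%N.
Proof. by move=> jk xv; apply: (@leq_bigmax_cond _ _ (fun j : 'I_k => j.+1) (Ordinal jk)). Qed.

Lemma rk_le v j : (j < k)%N -> (v < nth 0 x j)%N -> (rk v <= j)%N.
Proof.
move=> jk vx; apply/bigmax_leqP => i xi.
rewrite ltnNge; apply/negP => ji.
have h : (nth 0 x j <= nth 0 x i)%N by rewrite snth_le ?zx.
by have := leq_ltn_trans h (ltn_trans xi vx); rewrite ltnn.
Qed.

Lemma rk_mono u v : (u <= v)%N -> (rk u <= rk v)%N.
Proof.
move=> uv; apply/bigmax_leqP => i xi.
by apply: (@leq_bigmax_cond _ _ (fun j : 'I_k => j.+1) i); apply: leq_trans uv.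
Qed.

Lemma rk_k v : (rk v <= k)%N.
Proof. by apply/bigmax_leqP => i _; exact: ltn_ord. Qed.


Lemma psi_x : map psi x = z.
Proof.
apply: (@eq_from_nth _ 0); first by rewrite size_map zx zz.
move=> j; rewrite size_map => jx; rewrite (nth_map 0) // /psi mem_nth //.
rewrite index_uniq //; by move: sx; rewrite ltn_sorted_uniq_leq => /andP[].
Qed.

Lemma psi_y : map psi y = map (fun v => base (rk v) + index v y)%N y.
Proof.
apply/eq_in_map => v vy; rewrite /psi; case: ifP => // vx.
by move: (disj vx); rewrite vy.
Qed.

Lemma psi_mono u v : u \in x ++ y -> v \in x ++ y -> (u < v)%N -> (psi u < psi v)%N.
Proof.
rewrite !mem_cat /psi => Hu Hv uv.
have ixk w : w \in x -> (index w x < k)%N by rewrite -zx index_mem.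
have iyk w : w \in y -> (index w y < k)%N by rewrite -zy index_mem.
case ux: (u \in x); case vx: (v \in x).
- rewrite snth_lt ?zz ?ixk // -(snth_lt sx) ?zx ?ixk //.
  by rewrite !nth_index.
- have vy : v \in y by move: Hv; rewrite vx.
  have := rk_gt (ixk _ ux) (_ : nth 0 x (index u x) < v)%N.
  rewrite nth_index // => /(_ uv).
  have := rk_k v; case: (rk v) => // rho rhok; rewrite ltnS => jr /=.
  rewrite addSn ltnS; apply: leq_trans (leq_addr _ _).
  have := Hz (ixk _ ux) => /andP[_ h]; apply: leq_trans h _.
  exact: mono_m.
- have uy : u \in y by move: Hu; rewrite ux.
  have := rk_le (ixk _ vx) (_ : u < nth 0 x (index v x))%N.
  rewrite nth_index // => /(_ uv) rj.
  have := Hz (ixk _ vx) => /andP[h _]; apply: leq_trans h.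
  move: rj; case: (rk u) => [_|rho rj] /=.
    by apply: ltn_trans (iyk _ uy) (n'_gt (ixk _ vx)).
  rewrite addSn; apply: leq_trans (gapmn rj (ixk _ vx)).
  by rewrite ltnS ltn_add2l iyk.
- have uy : u \in y by move: Hu; rewrite ux.
  have vy : v \in y by move: Hv; rewrite vx.
  have ii : (index u y < index v y)%N.
    by rewrite -(snth_lt sy) ?zy ?iyk // !nth_index.
  have := rk_mono (ltnW uv); rewrite leq_eqVlt => /orP[/eqP->|rr].
    by rewrite ltn_add2l.
  apply: (leq_trans _ (leq_addr _ _)).
  have := rk_k v; move: rr; case: (rk v) => // rho'; rewrite ltnS => rr rk' /=.
  have h1 : (nth 0 n' rho' < (nth 0 m' rho').+1)%N by apply: ltn_trans (H1 rk') (ltnSn _).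
  apply: (@ltn_trans (nth 0 n' rho')) h1; move: rr; case: (rk u) => [_|rho rr] /=.
    by rewrite add0n; apply: ltn_trans (iyk _ uy) (n'_gt rk').
  rewrite addSn; apply: leq_trans (gapmn rr rk').
  by rewrite ltnS ltn_add2l iyk.
Qed.

Lemma psi_sorted S : sorted ltn S -> all (mem (x ++ y)) S -> sorted ltn (map psi S).
Proof.
move=> sS aS; rewrite sorted_map.
have H : {in mem (x ++ y) &, subrel ltn (relpre psi ltn)}.
  by move=> u v Hu Hv; exact: psi_mono.
exact: (sub_in_sorted H aS sS).
Qed.

End Psi.

Lemma decomp (x y : seq nat) : sorted ltn x -> sorted ltn y ->
  (forall v, v \in x -> v \notin y) ->
  sorted ltn (sort leq (x ++ y)) /\ size (sort leq (x ++ y)) = (size x + size y)%N /\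
  all (mem (x ++ y)) (sort leq (x ++ y)).
Proof.
move=> sx sy disj; split; last split.
- rewrite ltn_sorted_uniq_leq sort_sorted ?andbT; last exact: leq_total.
  rewrite sort_uniq cat_uniq.
  move: sx sy; rewrite !ltn_sorted_uniq_leq => /andP[-> _] /andP[-> _] /=.
  by rewrite andbT; apply/hasPn => v vy; apply/negP => vx; move: (disj v vx); rewrite vy.
- by rewrite size_sort size_cat.
- by apply/allP => v; rewrite mem_sort.
Qed.

Local Open Scope classical_set_scope.
Local Open Scope ring_scope.

Lemma tuple_sortedP k (t : k.-tuple nat) :
  (forall i j : 'I_k, (i < j)%N -> (tnth t i < tnth t j)%N) -> sorted ltn t.
Proof.
move=> H; rewrite sorted_pairwise; last exact: ltn_trans.
apply/(pairwiseP 0) => i j; rewrite !inE size_tuple => ik jk ij.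
by have := H (Ordinal ik) (Ordinal jk) ij; rewrite !(tnth_nth 0).
Qed.

Lemma hamming_le k (n m : k.-tuple nat) : (hamming n m <= k)%N.
Proof. by rewrite /hamming; apply: leq_trans (max_card _) _; rewrite card_ord. Qed.

Lemma alpha_ge0 (R : realType) M (d : M -> M -> R) k (f : k.-tuple nat -> M) j :
  is_metric d -> 0 <= alpha d f j.
Proof.
case=> d0 _ _ _; rewrite /alpha; set E := [set r | _].
case: (pselect (has_sup E)) => [hs|hs]; last by rewrite sup_out.
have [r [n [m [hnm _]]]] := hs.1.
apply: le_trans (d0 (f n) (f m)) _.
by apply: (sup_upper_bound hs); exists n, m.
Qed.

Definition mapt k (e : nat -> nat) (t : k.-tuple nat) : k.-tuple nat := map_tuple e t.

Lemma in_seqk_map k (e : nat -> nat) (t : k.-tuple nat) : sinc e -> in_seqk setT t ->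
  in_seqk setT (mapt e t).
Proof. by move=> se [st _]; split => //; rewrite /= sorted_map_sinc. Qed.

Lemma hamming_map k (e : nat -> nat) (n m : k.-tuple nat) : sinc e ->
  hamming (mapt e n) (mapt e m) = hamming n m.
Proof.
move=> se; rewrite /hamming; apply: eq_card => j /=.
by rewrite !inE /mapt !tnth_map (inj_eq (sinc_inj se)).
Qed.

Lemma lip_map (R : realType) M (d : M -> M -> R) k (f : k.-tuple nat -> M) e :
  sinc e -> lipschitz_H d f -> lipschitz_H d (fun t => f (mapt e t)).
Proof.
move=> se [L HL]; exists L => n m hn hm.
rewrite -(hamming_map n m se); apply: HL; exact: in_seqk_map.
Qed.

Lemma alpha_le (R : realType) M (d : M -> M -> R) k (f : k.-tuple nat -> M) e j :
  is_metric d -> sinc e -> lipschitz_H d f ->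
  alpha d (fun t => f (mapt e t)) j <= alpha d f j.
Proof.
move=> hd se [L HL]; rewrite /alpha.
set Eg := [set r | _]; set Ef := [set r | _].
case: (pselect (has_sup Eg)) => [hs|hs]; last by rewrite (sup_out hs) -/Ef; exact: (alpha_ge0 f j hd).
have sub : Eg `<=` Ef.
  move=> r [n [m [[hn hm hnm hj] ->]]]; exists (mapt e n), (mapt e m); split => //.
  split; try exact: in_seqk_map.
    by move=> i ij; rewrite /mapt !tnth_map hnm.
  by rewrite /mapt !tnth_map (sinc_ltE se).
apply: sup_le => //.
- by move=> r /sub; exact: le_down.
- exact: hs.1.
split; first by have [r Er] := hs.1; exists r; exact: sub.
exists (`|L| * k%:R) => r [n [m [[hn hm _ _] ->]]].
apply: le_trans (HL n m hn hm) _.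
apply: le_trans (_ : `|L| * (hamming n m)%:R <= _).
  by apply: ler_wpM2r => //; exact: ler_norm.
by apply: ler_wpM2l => //; rewrite ler_nat hamming_le.
Qed.

Lemma pnorm_le (R : realType) M (d : M -> M -> R) (p : R) k (f : k.-tuple nat -> M) e :
  1 < p -> is_metric d -> sinc e -> lipschitz_H d f ->
  alpha_pnorm d p (fun t => f (mapt e t)) <= alpha_pnorm d p f.
Proof.
move=> p1 hd se Lf; rewrite /alpha_pnorm.
have p0 : 0 <= p by apply: le_trans (ltW p1).
apply: ge0_ler_powR; first by rewrite invr_ge0.
- by rewrite nnegrE; apply: sumr_ge0 => i _; exact: powR_ge0.
- by rewrite nnegrE; apply: sumr_ge0 => i _; exact: powR_ge0.
apply: ler_sum => i _; apply: ge0_ler_powR => //; try rewrite nnegrE; try exact: alpha_ge0.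
exact: alpha_le.
Qed.
Lemma inf_range (E : nat -> nat) : injective E -> infinite_set (range E).
Proof.
move=> inj; apply/infiniteP/pcard_leP/injfunPex; exists E.
  by move=> x _; exists x.
by move=> m n _ _; apply: inj.
Qed.

Lemma lift_tuple k (E : nat -> nat) (t : k.-tuple nat) : sinc E ->
  in_seqk (range E) t -> exists u : seq nat,
    [/\ map E u = t, size u = k & sorted ltn u].
Proof.
move=> sE [st rt].
have [u eu] : exists u, map E u = t.
  apply: lift_seq => // v /tnthP [j ->]; have [a _ ea] := rt j; by exists a.
exists u; split => //; first by rewrite -(size_map E) eu size_tuple.
by rewrite -(sorted_map_sinc _ sE) eu.
Qed.

Section Main.
Variables (R : realType) (p : R) (M : Type) (d : M -> M -> R).
Hypotheses (hp : 1 < p) (hd : is_metric d).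

Lemma HC_HIC_k (lam : R) k (f : k.-tuple nat -> M) :
  0 < lam -> lam_HC d p lam -> lipschitz_H d f ->
  exists MM : set nat, infinite_set MM /\
      forall n m, interlaced MM n m -> d (f n) (f m) <= (lam *+ 2) * alpha_pnorm d p f.
Proof.
move=> lam0 HCl Lf.
set A := alpha_pnorm d p f.
pose N := (k + k).+1.
pose sel (s : seq nat) (I : k.-tuple 'I_N) : k.-tuple nat :=
  map_tuple (fun i : 'I_N => nth 0%N s i) I.
pose good (a b : k.-tuple nat) : bool := d (f a) (f b) <= lam * A.
pose col (s : seq nat) : {ffun (k.-tuple 'I_N * k.-tuple 'I_N) -> bool} :=
  [ffun IJ => good (sel s IJ.1) (sel s IJ.2)].
have [e [c0 [se He]]] := ramsey (k + k) col.
pose g := fun t => f (mapt e t).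
have Lg := lip_map se Lf.
have Ag : alpha_pnorm d p g <= A := pnorm_le hp hd se Lf.
have [x [y [hx hy dxy hg]]] := HCl k g Lg.
have gxy : good (mapt e x) (mapt e y).
  by rewrite /good; apply: le_trans hg _; rewrite ler_wpM2l // ltW.
have disj : forall v, v \in (x : seq nat) -> v \notin (y : seq nat).
  move=> v /tnthP[i ->]; apply/negP => /tnthP[j hj]; move: (dxy i j).
  by rewrite hj eqxx.
have [sS [zS aS]] := decomp hx.1 hy.1 disj.
set S := sort leq (x ++ y) in sS zS aS.
have {zS} zS : size S = (k + k)%N by rewrite /S size_sort size_cat !size_tuple.
pose K (w : k.-tuple nat) : k.-tuple 'I_N := map_tuple (fun v => inord (index v S)) w.
have selE : forall (phi : nat -> nat) (w : k.-tuple nat), {subset (w : seq nat) <= S} ->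
    val (sel (map e (map phi S)) (K w)) = map e (map phi w).
  move=> phi w wS; rewrite /= -!map_comp; apply/eq_in_map => v vw /=.
  have iS : (index v S < size S)%N by rewrite index_mem wS.
  rewrite inordK; last by apply: leq_trans iS _; rewrite zS.
  by rewrite (nth_map v) // nth_index // wS.
have xS : {subset (x : seq nat) <= S} by move=> v vx; rewrite mem_sort mem_cat vx.
have yS : {subset (y : seq nat) <= S} by move=> v vy; rewrite mem_sort mem_cat vy orbT.
have hom : forall phi, sorted ltn (map phi S) ->
    good (sel (map e (map phi S)) (K x)) (sel (map e (map phi S)) (K y)).
  move=> phi sT.
  have zT : size (map phi S) = (k + k)%N by rewrite size_map.
  have := congr1 (fun c : {ffun (k.-tuple 'I_N * k.-tuple 'I_N) -> bool} => c (K x, K y)) (He _ sT zT).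
  have := congr1 (fun c : {ffun (k.-tuple 'I_N * k.-tuple 'I_N) -> bool} => c (K x, K y)) (He _ sS zS).
  rewrite !ffunE /= => HS ->; rewrite -HS.
  have -> : sel (map e S) (K x) = mapt e x.
    by apply: val_inj; have := selE id x xS; rewrite !map_id.
  have -> : sel (map e S) (K y) = mapt e y.
    by apply: val_inj; have := selE id y yS; rewrite !map_id.
  exact: gxy.
pose q t := (k.+1 * t.+1)%N.
have sq : sinc q by move=> t; rewrite /q ltn_pmul2l.
have sE : sinc (e \o q) := sinc_comp se sq.
exists (range (e \o q)); split; first exact: inf_range (sinc_inj sE).
move=> n m [hn hm hnm hmn].
have [u [eu zu su]] := lift_tuple sE hn.
have [v [ev zv sv]] := lift_tuple sE hm.
pose n' := map q u; pose m' := map q v.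
have qgap : forall a b, (a < b)%N -> (q a + k < q b)%N.
  move=> a b ab; rewrite /q; apply: leq_trans (_ : k.+1 * a.+2 <= _)%N.
    by rewrite [in X in (_ <= X)%N]mulnS addnC addSn.
  by rewrite leq_mul2l ltnS ab orbT.
have nthT : forall (t : k.-tuple nat) w, map (e \o q) w = t -> size w = k ->
    forall j (jk : (j < k)%N), tnth t (Ordinal jk) = e (q (nth 0%N w j)).
  move=> t w ew zw j jk; rewrite (tnth_nth 0%N) /= -ew (nth_map 0%N) //.
  by rewrite zw.
have H1 : forall j, (j < k)%N -> (nth 0%N n' j < nth 0%N m' j)%N.
  move=> j jk; have := hnm (Ordinal jk); rewrite (nthT _ _ eu zu) (nthT _ _ ev zv).
  rewrite (sinc_ltE se) => h.
  by rewrite !(nth_map 0%N) ?zu ?zv.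
have H2 : forall j, (j.+1 < k)%N -> (nth 0%N m' j + k < nth 0%N n' j.+1)%N.
  move=> j jk; have := hmn (Ordinal (ltnW jk)) (Ordinal jk) erefl.
  rewrite (nthT _ _ eu zu) (nthT _ _ ev zv) (sinc_ltE se) (sinc_ltE sq) => h.
  rewrite !(nth_map 0%N) ?zu ?zv //; last exact: ltnW.
  exact: qgap.
have H3 : (0 < k)%N -> (k < nth 0%N n' 0)%N.
  move=> k0; rewrite (nth_map 0%N) ?zu // /q.
  by apply: leq_trans (leq_pmulr _ _); last exact: ltn0Sn.
have zn' : size n' = k by rewrite size_map.
have zm' : size m' = k by rewrite size_map.
have sn' : sorted ltn n' by rewrite sorted_map_sinc.
have sm' : sorted ltn m' by rewrite sorted_map_sinc.
have Hz1 : forall j, (j < k)%N -> (nth 0%N n' j <= nth 0%N n' j <= nth 0%N m' j)%N.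
  by move=> j jk; rewrite leqnn ltnW // H1.
have Hz2 : forall j, (j < k)%N -> (nth 0%N n' j <= nth 0%N m' j <= nth 0%N m' j)%N.
  by move=> j jk; rewrite leqnn ltnW // H1.
have sT1 := psi_sorted (size_tuple x) (size_tuple y) zn' hx.1 hy.1 sn' H1 H2 H3 Hz1 sS aS.
have sT2 := psi_sorted (size_tuple x) (size_tuple y) zm' hx.1 hy.1 sm' H1 H2 H3 Hz2 sS aS.
have g1 := hom _ sT1; have g2 := hom _ sT2.
have e1 : sel (map e (map (psi k x y n' m') S)) (K x) = n.
  apply: val_inj; rewrite selE // psi_x ?size_tuple //; last exact: hx.1.
  by rewrite /= -eu map_comp.
have e2 : sel (map e (map (psi k x y m' m') S)) (K x) = m.
  apply: val_inj; rewrite selE // psi_x ?size_tuple //; last exact: hx.1.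
  by rewrite /= -ev map_comp.
have e3 : sel (map e (map (psi k x y n' m') S)) (K y) =
          sel (map e (map (psi k x y m' m') S)) (K y).
  by apply: val_inj; rewrite !selE // !psi_y.
move: g1 g2; rewrite /good e1 e2 e3 => g1 g2.
case: hd => _ _ dsym dtri.
apply: le_trans (dtri _ (f (sel (map e (map (psi k x y m' m') S)) (K y))) _) _.
rewrite mulr2n mulrDl; apply: lerD; first exact: g1.
by rewrite dsym; exact: g2.
Qed.

Lemma inf_unbounded (A : set nat) : infinite_set A -> forall n, exists m, A m /\ (n < m)%N.
Proof.
move=> Ai n; apply: contra_notP Ai => H.
apply: (@sub_finite_set _ _ `I_n.+1); last exact: finite_II.
move=> m Am; rewrite /= ltnNge; apply/negP => nm; apply: H; by exists m.
Qed.

Lemma HIC_HC_k (lam : R) k (f : k.-tuple nat -> M) :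
  lam_HIC d p lam -> lipschitz_H d f ->
  exists n m, [/\ in_seqk setT n, in_seqk setT m,
      (forall i j : 'I_k, tnth n i != tnth m j) &
      d (f n) (f m) <= lam * alpha_pnorm d p f].
Proof.
move=> HICl Lf; have [MM [MMi HM]] := HICl k f Lf.
have [F HF] := choice (inf_unbounded MMi).
pose s := fix s i := if i is i'.+1 then F (s i') else F 0%N.
have ss : sinc s by move=> i; exact: (HF (s i)).2.
have MMs : forall i, MM (s i) by case=> [|i]; [exact: (HF 0%N).1 | exact: (HF (s i)).1].
pose n : k.-tuple nat := [tuple s (val j).*2 | j < k].
pose m : k.-tuple nat := [tuple s ((val j).*2).+1 | j < k].
have sn : sorted ltn n.
  by apply: tuple_sortedP => i j ij; rewrite !tnth_mktuple (sinc_ltE ss) ltn_double.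
have sm : sorted ltn m.
  by apply: tuple_sortedP => i j ij; rewrite !tnth_mktuple (sinc_ltE ss) ltnS ltn_double.
have hI : interlaced MM n m.
  split.
  - by split => // j; rewrite tnth_mktuple.
  - by split => // j; rewrite tnth_mktuple.
  - by move=> j; rewrite !tnth_mktuple (sinc_ltE ss).
  - by move=> i j ij; rewrite !tnth_mktuple (sinc_ltE ss) ij doubleS.
exists n, m; split => //; last exact: HM.
move=> i j; rewrite !tnth_mktuple; apply/negP => /eqP /(sinc_inj ss) /(congr1 odd).
by rewrite /= !odd_double.
Qed.

End Main.

Unset Implicit Arguments.

Theorem mainTheorem4 (R : realType) (p : R) (hp : 1 < p)
  (M : Type) (d : M -> M -> R) (hd : is_metric d) :
  HC d p <-> HIC d p.
Proof.
split.
- move=> [lam [lam0 HCl]]; exists (lam *+ 2); split; first by rewrite pmulrn_lgt0.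
  move=> k f Lf; exact: HC_HIC_k.
- move=> [lam [lam0 HICl]]; exists lam; split => // k f Lf.
  exact: HIC_HC_k.
Qed.
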